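(* Let $(\mathbf a,\mathbf b)$ be a binary GCP of length $N$ of one of the following three kinds: (i) $N=10^\beta$ ($\beta\ge1$), obtained as $(\mathbf e_0,\mathbf f_0)=K_{10}$, $(\mathbf e_i,\mathbf f_i)=\mathrm{Turyn}(K_{10},(\mathbf e_{i-1},\mathbf f_{i-1}))$; set $Z=4N/10+1$; (ii) $N=26^\gamma$ ($\gamma\ge1$), obtained as $(\mathbf e_0,\mathbf f_0)=K_{26}$, $(\mathbf e_i,\mathbf f_i)=\mathrm{Turyn}(K_{26},(\mathbf e_{i-1},\mathbf f_{i-1}))$; set $Z=12N/26+1$; (iii) $N=10^\beta26^\gamma$ ($\beta\ge0$, $\gamma\ge1$), obtained as $(\mathbf e_0,\mathbf f_0)=K_{26}$, $(\mathbf e_i,\mathbf f_i)=\mathrm{Turyn}(\mathcal A_i,(\mathbf e_{i-1},\mathbf f_{i-1}))$ with each $\mathcal A_i\in\{K_{10},K_{26}\}$; set $Z=12N/26+1$. Let $(\mathbf c,\mathbf d)=(\overleftarrow{\mathbf b},-\overleftarrow{\mathbf a})$, $\mathbf e=(\mathbf a\|\mathbf c)$, $\mathbf f=(\mathbf b\|\mathbf d)$, and for $x_0,y_0,x_1,y_1\in\mathbb U_q$ let $\mathbf g=(x_0,e_0,\dots,e_{2N-1},y_0)$, $\mathbf h=(x_1,f_0,\dots,f_{2N-1},y_1)$. If $x_0-\overline{y_1}=0$, $x_1+\overline{y_0}=0$, $x_0=x_1$ and $\overline{y_0}=-\overline{y_1}$, then $(\mathbf g,\mathbf h)$ is a $(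2N+2,Z)$-CZCP.
   Context: $q\ge2$ is an integer and $\mathbb U_q=\{e^{2\pi\sqrt{-1}t/q}:0\le t<q\}$. $\overleftarrow{\mathbf a}$ denotes the reversal of $\mathbf a$; $\|$ denotes concatenation. A binary GCP of length $N$ is a pair of $\pm1$ sequences with $\rho_{\mathbf a}(\tau)+\rho_{\mathbf b}(\tau)=0$ for all $\tau\neq0$. Kernels (with $+=1$, $-=-1$; first row $\mathbf a$, second row $\mathbf b$): $K_{10}=(++-+-+--++,\;++-+++++--)$; $K_{26}=(++++-++--+-+-+--+-+++--+++,\;++++-++--+-+++++-+---++---)$. Turyn's method: for binary GCPs $\mathcal A=(\mathbf a,\mathbf b)$ of length $N$ and $\mathcal B=(\mathbf c,\mathbf d)$ of length $M$, $\mathrm{Turyn}(\mathcal A,\mathcal B)=(\mathbf e,\mathbf f)$ of length $MN$ with $\mathbf e=\mathbf c\otimes\frac{\mathbf a+\mathbf b}2-\overleftarrow{\mathbf d}\otimes\frac{\mathbf b-\mathbf a}2$, $\mathbf f=\mathbf d\otimes\frac{\mathbf a+\mathbf b}2+\overleftarrow{\mathbf c}\otimes\frac{\mathbf b-\mathbf a}2$, where $\mathbf u\otimes\mathbf v=(u_0\mathbf v,u_1\mathbf v,\dots)$. Aperiodic correlation: for complex sequences of length $N$, $\rho_{\mathbf a,\mathbf b}(\tau)=\sum_{k=0}^{N-1-\tau}a_k\overline{b_{k+\tau}}$ for $0\le\tau\le N-1$, $\rho_{\mathbf a,\mathbf b}(\tau)=\sum_{k=0}^{N-1+\tau}a_{k-\tau}\overline{b_k}$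 for $-(N-1)\le\tau\le-1$, $0$ otherwise; $\rho_{\mathbf a}=\rho_{\mathbf a,\mathbf a}$. CZCP: with $\mathcal T_1=\{1,\dots,Z\}$, $\mathcal T_2=\{N-Z,\dots,N-1\}$, a pair of length-$N$ sequences is an $(N,Z)$-CZCP if $\rho_{\mathbf a}(\tau)+\rho_{\mathbf b}(\tau)=0$ for all $|\tau|\in\mathcal T_1\cup\mathcal T_2$ and $\rho_{\mathbf a,\mathbf b}(\tau)+\rho_{\mathbf b,\mathbf a}(\tau)=0$ for all $|\tau|\in\mathcal T_2$. *)

(* Defs.v *)
From HB Require Import structures.
From mathcomp Require Import all_boot all_order all_algebra all_field.
Set Implicit Arguments. Unset Strict Implicit. Unset Printing Implicit Defensive.
Import Order.TTheory GRing.Theory Num.Theory.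
Local Open Scope ring_scope.

(* U_q = { e^{2 pi i t / q} : 0 <= t < q } = the set of q-th roots of unity *)
Definition Uq (q : nat) : pred algC := fun z => z ^+ q == 1.

Definition spair := (seq algC * seq algC)%type.

Definition seqsub (u v : seq algC) : seq algC := [seq p.1 - p.2 | p <- zip u v].
Definition seqopp (u : seq algC) : seq algC := [seq - x | x <- u].

Definition kron (u v : seq algC) : seq algC :=
  flatten [seq [seq x * y | y <- v] | x <- u].

Definition turyn (A B : spair) : spair :=
  let: (a, b) := A in
  let: (c, d) := B in
  let s := [seq (p.1 + p.2) / 2 | p <- zip a b] in
  let t := [seq (p.2 - p.1) / 2 | p <- zip a b] in
  (seqsub (kron c s) (kron (rev d) t),
   [seq p.1 + p.2 | p <- zip (kron d s) (kron (rev c) t)]).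

Definition pm (s : seq int) : seq algC := [seq z%:~R | z <- s].

Definition K10 : spair :=
  (pm [:: 1; 1; -1; 1; -1; 1; -1; -1; 1; 1],
   pm [:: 1; 1; -1; 1; 1; 1; 1; 1; -1; -1]).

Definition K26 : spair :=
  (pm [:: 1; 1; 1; 1; -1; 1; 1; -1; -1; 1; -1; 1; -1; 1; -1; -1; 1; -1; 1; 1; 1; -1; -1; 1; 1; 1],
   pm [:: 1; 1; 1; 1; -1; 1; 1; -1; -1; 1; -1; 1; 1; 1; 1; 1; -1; 1; -1; -1; -1; 1; 1; -1; -1; -1]).

Definition turyn_chain (init : spair) (s : seq bool) : spair :=
  foldl (fun acc (c : bool) => turyn (if c then K10 else K26) acc) init s.

Definition rho (a b : seq algC) (tau : int) : algC :=
  let N := size a in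
  match tau with
  | Posz t => \sum_(k < N - t) a`_k * (b`_(k + t))^*
  | Negz _ => let t := `|tau|%N in \sum_(k < N - t) a`_(k + t) * (b`_k)^*
  end.

Definition CZCP (N Z : nat) (a b : seq algC) : Prop :=
  [/\ size a = N, size b = N,
      (forall tau : int,
          ((1 <= `|tau|%N <= Z) || (N - Z <= `|tau|%N <= N - 1))%N ->
          rho a a tau + rho b b tau = 0) &
      (forall tau : int, (N - Z <= `|tau|%N <= N - 1)%N ->
          rho a b tau + rho b a tau = 0)].

(* Main.v *)
Require Import Defs.
From HB Require Import structures.
From mathcomp Require Import all_boot all_order all_algebra all_field.
From mathcomp Require Import ring zify.
Import Order.TTheory GRing.Theory Num.Theory.
Local Open Scope ring_scope.

Lemma Poly_cons (x : algC) s : Poly (x :: s) = x%:P + 'X * Poly s.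
Proof. by rewrite /= cons_poly_def addrC mulrC. Qed.

Lemma Poly_cat (u v : seq algC) : Poly (u ++ v) = Poly u + 'X^(size u) * Poly v.
Proof.
elim: u => [|x u IH]; first by rewrite /= expr0 mul1r add0r.
by rewrite cat_cons !Poly_cons IH /= exprS; ring.
Qed.

Lemma Poly_zip (al be : algC) (u v : seq algC) : size u = size v ->
  Poly [seq al * p.1 + be * p.2 | p <- zip u v] = al%:P * Poly u + be%:P * Poly v.
Proof.
elim: u v => [|x u IH] [|y v] //=; first by move=> _; rewrite !mulr0 addr0.
move=> [] /IH => IHu; rewrite !cons_poly_def IHu.
rewrite polyCD !polyCM; ring.
Qed.

Lemma Poly_scal (x : algC) (v : seq algC) : Poly [seq x * y | y <- v] = x%:P * Poly v.
Proof.
elim: v => [|y v IH]; first by rewrite /= mulr0.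
by rewrite map_cons !Poly_cons IH polyCM; ring.
Qed.

Lemma Poly_opp (v : seq algC) : Poly [seq - y | y <- v] = - Poly v.
Proof.
elim: v => [|y v IH]; first by rewrite /= oppr0.
by rewrite map_cons !Poly_cons IH polyCN; ring.
Qed.

Lemma kron_cons (x : algC) u v : kron (x :: u) v = [seq x * y | y <- v] ++ kron u v.
Proof. by []. Qed.

Lemma kron_cat u1 u2 v : kron (u1 ++ u2) v = kron u1 v ++ kron u2 v.
Proof. by rewrite /kron map_cat flatten_cat. Qed.

Lemma size_kron u v : size (kron u v) = (size u * size v)%N.
Proof. elim: u => [|x u IH] //; by rewrite kron_cons size_cat size_map IH mulSn. Qed.

Lemma rev_kron u v : rev (kron u v) = kron (rev u) (rev v).
Proof.
elim: u => [|x u IH] //; rewrite kron_cons rev_cat IH rev_cons -cats1 kron_cat.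
rewrite /kron /= cats0; congr (_ ++ _); by rewrite map_rev.
Qed.

Lemma Poly_kron u v : Poly (kron u v) = (Poly u \Po 'X^(size v)) * Poly v.
Proof.
elim: u => [|x u IH]; first by rewrite /= comp_poly0 mul0r.
rewrite kron_cons Poly_cat size_map IH Poly_scal Poly_cons.
rewrite comp_polyD comp_polyC comp_polyM comp_polyX; ring.
Qed.

Lemma rev_zipmap (T : Type) (f : algC * algC -> T) u v : size u = size v ->
  rev [seq f p | p <- zip u v] = [seq f p | p <- zip (rev u) (rev v)].
Proof. by move=> h; rewrite -map_rev rev_zip. Qed.

Lemma size_zipmap (T : Type) (f : algC * algC -> T) u v : size u = size v ->
  size [seq f p | p <- zip u v] = size u.
Proof. by move=> h; rewrite size_map size_zip h minnn. Qed.

Lemma nth_zipmap (f : algC * algC -> algC) u v k : size u = size v -> (k < size u)%N ->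
  [seq f p | p <- zip u v]`_k = f (u`_k, v`_k).
Proof.
move=> h hk; rewrite (nth_map (0,0)); last by rewrite size_zip h minnn -h.
by rewrite nth_zip.
Qed.

Lemma nth_kron u v i j : (j < size v)%N -> (kron u v)`_(i * size v + j) = u`_i * v`_j.
Proof.
move=> hj; elim: u i => [|x u IH] i; first by rewrite /= !nth_nil mul0r.
rewrite kron_cons nth_cat size_map; case: i => [|i].
  by rewrite mul0n add0n hj (nth_map 0).
rewrite mulSn -addnA ltnNge leq_addr /= addKn IH //.
Qed.

Definition Rl (x : algC) : bool := x^* == x.

Lemma map_conj_id s : all Rl s -> map Num.conj s = s.
Proof. elim: s => [|x s IH] //= /andP [/eqP -> /IH ->] //. Qed.

Lemma all_kron u v : all Rl u -> all Rl v -> all Rl (kron u v).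
Proof.
elim: u => [|x u IH] //= /andP [hx hu] hv; rewrite all_cat IH // andbT all_map.
apply/allP => y /(allP hv) hy /=; rewrite /Rl rmorphM; apply/eqP; congr (_ * _); exact/eqP.
Qed.

Lemma all_zipmap (f : algC * algC -> algC) u v :
  (forall x y, Rl x -> Rl y -> Rl (f (x, y))) -> all Rl u -> all Rl v ->
  all Rl [seq f p | p <- zip u v].
Proof.
move=> hf; elim: u v => [|x u IH] [|y v] //= /andP [hx hu] /andP [hy hv].
by rewrite hf // IH.
Qed.


Definition Inv (A : spair) (N p : nat) : Prop :=
  [/\ [/\ size A.1 = N, size A.2 = N & (0 < N)%N], (all Rl A.1 /\ all Rl A.2),
      'X * (Poly A.1 * Poly (rev A.1) + Poly A.2 * Poly (rev A.2)) = ((2 * N)%N%:R)%:P * ('X^N),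
      ((forall j, (j < p)%N -> A.1`_j = A.2`_j) /\
      (forall j, (j < p)%N -> A.1`_(N - j.+1) = - A.2`_(N - j.+1)))
    & (p < N)%N].

Lemma Poly_seqsub (u v : seq algC) : size u = size v -> Poly (seqsub u v) = Poly u - Poly v.
Proof.
move=> h; rewrite /seqsub (eq_map (g := fun p => 1 * p.1 + (-1) * p.2)).
  by rewrite Poly_zip // polyC1 polyCN; ring.
by move=> q; ring.
Qed.

Lemma Poly_zipadd (u v : seq algC) : size u = size v ->
  Poly [seq p.1 + p.2 | p <- zip u v] = Poly u + Poly v.
Proof.
move=> h; rewrite (eq_map (g := fun p => 1 * p.1 + 1 * p.2)).
  by rewrite Poly_zip // polyC1; ring.
by move=> q; ring.
Qed.

Lemma turyn_gcp A B n pa M p : Inv A n pa -> Inv B M p ->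
  let C := turyn A B in
  'X * (Poly C.1 * Poly (rev C.1) + Poly C.2 * Poly (rev C.2)) = ((2 * (n * M))%N%:R)%:P * 'X^(n * M).
Proof.
case: A => a0 b0; case: B => c d /=.
case=> /= [[sa sb n0] [ra rb] HA _ _] [[sc sd M0] [rc rd] HC _ _].
set s := [seq (p.1 + p.2) / 2 | p <- zip a0 b0].
set t := [seq (p.2 - p.1) / 2 | p <- zip a0 b0].
have sab : size a0 = size b0 by rewrite sa sb.
have ss : size s = n by rewrite size_zipmap.
have st : size t = n by rewrite size_zipmap.
have Es : s = [seq 2^-1 * p.1 + 2^-1 * p.2 | p <- zip a0 b0].
  by apply: eq_map => q; rewrite mulrC mulrDr.
have Et : t = [seq (- 2^-1) * p.1 + 2^-1 * p.2 | p <- zip a0 b0].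
  by apply: eq_map => q; rewrite mulrC mulrDr mulrN mulNr addrC.
have rs : rev s = [seq 2^-1 * p.1 + 2^-1 * p.2 | p <- zip (rev a0) (rev b0)].
  by rewrite Es rev_zipmap.
have rt : rev t = [seq (- 2^-1) * p.1 + 2^-1 * p.2 | p <- zip (rev a0) (rev b0)].
  by rewrite Et rev_zipmap.
have sr : size (rev a0) = size (rev b0) by rewrite !size_rev.
set h := (2^-1 : algC)%:P.
have PS : Poly s = h * Poly a0 + h * Poly b0 by rewrite Es Poly_zip.
have PT : Poly t = - h * Poly a0 + h * Poly b0 by rewrite Et Poly_zip // polyCN.
have PSr : Poly (rev s) = h * Poly (rev a0) + h * Poly (rev b0) by rewrite rs Poly_zip.
have PTr : Poly (rev t) = - h * Poly (rev a0) + h * Poly (rev b0) by rewrite rt Poly_zip // polyCN.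
have k1 : size (kron c s) = size (kron (rev d) t) by rewrite !size_kron size_rev ss st sc sd.
have k2 : size (kron d s) = size (kron (rev c) t) by rewrite !size_kron size_rev ss st sc sd.
have re : rev (seqsub (kron c s) (kron (rev d) t)) = seqsub (kron (rev c) (rev s)) (kron d (rev t)).
  by rewrite /seqsub rev_zipmap // !rev_kron revK.
have rf : rev [seq p.1 + p.2 | p <- zip (kron d s) (kron (rev c) t)]
          = [seq p.1 + p.2 | p <- zip (kron (rev d) (rev s)) (kron c (rev t))].
  by rewrite rev_zipmap // !rev_kron revK.
rewrite re rf Poly_seqsub // Poly_seqsub; last by rewrite !size_kron !size_rev ss st sc sd.
rewrite (@Poly_zipadd (kron d s) (kron (rev c) t)) // (@Poly_zipadd (kron (rev d) (rev s))); last by rewrite !size_kron !size_rev ss st sc sd.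
rewrite !Poly_kron !size_rev ss st PS PT PSr PTr.
have HC' := congr1 (fun q => q \Po 'X^n) HC; move: HC' => /=.
rewrite comp_polyM comp_polyX comp_polyD !comp_polyM comp_polyC comp_Xn_poly => HC'.
apply: (mulfI (x := 'X^n)); first by rewrite expf_neq0 // polyX_eq0.
set C1 := Poly c \Po 'X^n; set C2 := Poly (rev c) \Po 'X^n.
set D1 := Poly d \Po 'X^n; set D2 := Poly (rev d) \Po 'X^n.
transitivity (('X^n * (C1 * C2 + D1 * D2)) * ('X * (Poly a0 * Poly (rev a0) + Poly b0 * Poly (rev b0))) * (2 * h * h)).
  ring.
rewrite HC' HA -exprM.
transitivity ((((2 * M)%N%:R * (2 * n)%N%:R * (2 * (2^-1 * 2^-1))) : algC)%:P * ('X^n * 'X^(n * M))).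
  rewrite /h !polyCM !polyC_natr; ring.
rewrite [LHS]mulrCA; congr (_ * (_ * _)); congr (_%:P).
rewrite !natrM; field. all: by [].
Qed.

Lemma RlE x : Rl x -> x^* = x. Proof. by move/eqP. Qed.
Lemma RlD x y : Rl x -> Rl y -> Rl (x + y).
Proof. by move=> hx hy; rewrite /Rl rmorphD; apply/eqP; congr (_ + _); apply/eqP. Qed.
Lemma RlN x : Rl x -> Rl (- x).
Proof. by move=> hx; rewrite /Rl rmorphN; apply/eqP; congr (- _); apply/eqP. Qed.
Lemma RlM x y : Rl x -> Rl y -> Rl (x * y).
Proof. by move=> hx hy; rewrite /Rl rmorphM; apply/eqP; congr (_ * _); apply/eqP. Qed.
Lemma RlV2 : Rl (2^-1). Proof. by rewrite /Rl fmorphV rmorph_nat. Qed.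

Lemma nth_kron' u v n i j : size v = n -> (j < n)%N -> (kron u v)`_(i * n + j) = u`_i * v`_j.
Proof. by move=> <-; apply: nth_kron. Qed.

Lemma idx_lem n M i r : (r < n)%N -> (i < M)%N ->
  (n * M - (i * n + r).+1 = (M - i.+1) * n + (n - r.+1))%N.
Proof.
move=> hr hi.
have [k ->] : exists k, M = (i.+1 + k)%N by exists (M - i.+1)%N; rewrite subnKC.
nia.
Qed.

Lemma turyn_inv A B n pa M p : Inv A n pa -> Inv B M p -> Inv (turyn A B) (n * M) (n * p).
Proof.
move=> IA IB; have G := @turyn_gcp A B n pa M p IA IB.
move: IA IB G; case: A => a0 b0; case: B => c d /=.
case=> /= [[sa sb n0] [ra rb] HA _ _] [[/= sc sd M0] [/= rc rd] /= HC [/= pre suf] pM] /= G.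
set s := [seq (p.1 + p.2) / 2 | p <- zip a0 b0] in G *.
set t := [seq (p.2 - p.1) / 2 | p <- zip a0 b0] in G *.
have sab : size a0 = size b0 by rewrite sa sb.
have ss : size s = n by rewrite size_zipmap.
have st : size t = n by rewrite size_zipmap.
have k1 : size (kron c s) = size (kron (rev d) t) by rewrite !size_kron size_rev ss st sc sd.
have k2 : size (kron d s) = size (kron (rev c) t) by rewrite !size_kron size_rev ss st sc sd.
have ke : size (kron c s) = (n * M)%N by rewrite size_kron ss sc mulnC.
have kf : size (kron d s) = (n * M)%N by rewrite size_kron ss sd mulnC.
have pM' : (p <= M)%N by apply: ltnW.
split => /=.
- by rewrite /seqsub !size_zipmap // muln_gt0 n0 M0.
- have Rs : all Rl s.
    by apply: all_zipmap => // x y hx hy; apply: RlM; [apply: RlD | apply: RlV2].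
  have Rt : all Rl t.
    by apply: all_zipmap => // x y hx hy; apply: RlM; [apply: RlD => //; apply: RlN | apply: RlV2].
  split; apply: all_zipmap => //.
  + by move=> x y hx hy; apply: RlD => //; apply: RlN.
  + by apply: all_kron.
  + by apply: all_kron; rewrite ?all_rev.
  + by move=> x y hx hy; apply: RlD.
  + by apply: all_kron.
  + by apply: all_kron; rewrite ?all_rev.
- exact: G.
- split => j hj.
  + have ltj : (j < n * M)%N by apply: (leq_trans hj); rewrite leq_mul2l pM' orbT.
    have hr : (j %% n < n)%N by rewrite ltn_pmod.
    have hi : (j %/ n < p)%N by rewrite ltn_divLR // mulnC.
    have hiM : (j %/ n < M)%N by apply: (leq_trans hi).
    rewrite /seqsub (nth_zipmap _ _ _ _ k1) ?ke // (nth_zipmap _ _ _ _ k2) ?kf //=.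
    rewrite (divn_eq j n).
    rewrite !(nth_kron' _ _ _ _ _ ss) // !(nth_kron' _ _ _ _ _ st) //.
    rewrite !nth_rev ?sc ?sd // pre // suf //; ring.
  + have ltj : (j < n * M)%N by apply: (leq_trans hj); rewrite leq_mul2l pM' orbT.
    have hr : (j %% n < n)%N by rewrite ltn_pmod.
    have hi : (j %/ n < p)%N by rewrite ltn_divLR // mulnC.
    have hiM : (j %/ n < M)%N by apply: (leq_trans hi).
    have hrr : (n - (j %% n).+1 < n)%N by move: (j %% n)%N hr n0 => i; lia.
    have hMi : (M - (j %/ n).+1 < M)%N by move: (j %/ n)%N hiM M0 => i; lia.
    have lt2 : (n * M - j.+1 < n * M)%N by move: (n * M)%N ltj => K; lia.
    rewrite /seqsub (nth_zipmap _ _ _ _ k1) ?ke // (nth_zipmap _ _ _ _ k2) ?kf //=.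
    rewrite {1 2 3 4}(divn_eq j n) idx_lem //.
    rewrite !(nth_kron' _ _ _ _ _ ss) // !(nth_kron' _ _ _ _ _ st) //.
    rewrite !nth_rev ?sc ?sd //.
    have -> : (M - (M - (j %/ n).+1).+1 = j %/ n)%N by move: (j %/ n)%N hiM => i; lia.
    rewrite (suf (j %/ n)%N) // (pre (j %/ n)%N) //; ring.
- by rewrite ltn_pmul2l.
Qed.


Definition hp {R : comRingType} (x : R) (s : seq R) := foldr (fun c p => c + x * p) 0 s.

Lemma Poly_pm s : Poly (pm s) = hp 'X (map intr s).
Proof.
elim: s => [|z s IH] //=; rewrite cons_poly_def IH /hp /=.
by rewrite (rmorph_int polyC) addrC mulrC.
Qed.

Lemma gcp10_abs (R : comRingType) (x : R) :
  x * (hp x (map intr [:: 1; 1; -1; 1; -1; 1; -1; -1; 1; 1]%Z) *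
       hp x (map intr (rev [:: 1; 1; -1; 1; -1; 1; -1; -1; 1; 1]%Z)) +
       hp x (map intr [:: 1; 1; -1; 1; 1; 1; 1; 1; -1; -1]%Z) *
       hp x (map intr (rev [:: 1; 1; -1; 1; 1; 1; 1; 1; -1; -1]%Z)))
  = (2 * 10)%N%:R * x ^+ 10.
Proof. rewrite /= /hp /rev /=. ring. Qed.

Lemma gcp26_abs (R : comRingType) (x : R) :
  x * (hp x (map intr [:: 1; 1; 1; 1; -1; 1; 1; -1; -1; 1; -1; 1; -1; 1; -1; -1; 1; -1; 1; 1; 1; -1; -1; 1; 1; 1]%Z) *
       hp x (map intr (rev [:: 1; 1; 1; 1; -1; 1; 1; -1; -1; 1; -1; 1; -1; 1; -1; -1; 1; -1; 1; 1; 1; -1; -1; 1; 1; 1]%Z)) +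
       hp x (map intr [:: 1; 1; 1; 1; -1; 1; 1; -1; -1; 1; -1; 1; 1; 1; 1; 1; -1; 1; -1; -1; -1; 1; 1; -1; -1; -1]%Z) *
       hp x (map intr (rev [:: 1; 1; 1; 1; -1; 1; 1; -1; -1; 1; -1; 1; 1; 1; 1; 1; -1; 1; -1; -1; -1; 1; 1; -1; -1; -1]%Z)))
  = (2 * 26)%N%:R * x ^+ 26.
Proof. rewrite /= /hp /rev /=. ring. Qed.

Lemma all_pm s : all Rl (pm s).
Proof. by rewrite all_map; apply/allP => z _ /=; rewrite /Rl rmorph_int. Qed.

Lemma gcp_pm sa sb :
  'X * (Poly (pm sa) * Poly (rev (pm sa)) + Poly (pm sb) * Poly (rev (pm sb))) =
  'X * (hp 'X (map intr sa) * hp 'X (map intr (rev sa)) + hp 'X (map intr sb) * hp 'X (map intr (rev sb))).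
Proof. by rewrite /pm -!map_rev -!/(pm _) !Poly_pm. Qed.

Lemma im1 : ((-1)%:~R : algC) = - 1%:~R. Proof. by rewrite rmorphN. Qed.

Lemma inv10 : Inv K10 10 4.
Proof.
split.
- by [].
- by split; apply: all_pm.
- have := @gcp10_abs _ ('X : {poly algC}); rewrite -gcp_pm -polyC_natr; exact.
- split => j hj; do 4? [case: j hj => [|j] hj]; rewrite /= ?im1 ?opprK //.
- by [].
Qed.

Lemma inv26 : Inv K26 26 12.
Proof.
split.
- by [].
- by split; apply: all_pm.
- have := @gcp26_abs _ ('X : {poly algC}); rewrite -gcp_pm -polyC_natr; exact.
- split => j hj; do 12? [case: j hj => [|j] hj]; rewrite /= ?im1 ?opprK //.
- by [].
Qed.

Lemma iter_inv K n p k : Inv K n p -> Inv (iter k (turyn K) K) (n ^ k.+1) (n ^ k * p).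
Proof.
move=> IK; elim: k => [|k IH]; first by rewrite expn1 expn0 mul1n.
have := @turyn_inv _ _ _ _ _ _ IK IH; rewrite /= -expnS mulnA -expnS; exact.
Qed.

Lemma chain_inv s : forall init N p, Inv init N p ->
  Inv (turyn_chain init s) (10 ^ (count id s) * 26 ^ (size s - count id s) * N)
                           (10 ^ (count id s) * 26 ^ (size s - count id s) * p).
Proof.
elim: s => [|b s IH] init N p h; first by rewrite /= !mul1n.
have cs := count_size id s.
rewrite /turyn_chain /= -/(turyn_chain _ s).
case: b.
- have := IH _ _ _ (@turyn_inv _ _ _ _ _ _ inv10 h).
  rewrite /= add1n subSS expnS.
  by rewrite !mulnA [(10 ^ _ * 26 ^ _ * 10)%N]mulnC !mulnA.
- have := IH _ _ _ (@turyn_inv _ _ _ _ _ _ inv26 h).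
  rewrite /= add0n subSn // expnS.
  by rewrite !mulnA [(10 ^ _ * 26 ^ _ * 26)%N]mulnC [(10 ^ _ * 26)%N]mulnC !mulnA.
Qed.


Lemma rho_pos (g h : seq algC) t : size g = size h -> (t < size g)%N ->
  rho g h (Posz t) = (Poly g * Poly (map Num.conj (rev h)))`_(size g - t.+1).
Proof.
move=> sgh ht; rewrite /rho coefM.
have -> : ((size g - t.+1).+1 = size g - t)%N by lia.
apply: eq_bigr => j _; rewrite !coef_Poly.
have hj := ltn_ord j.
rewrite (nth_map 0); last by rewrite size_rev -sgh; lia.
rewrite nth_rev -?sgh; last by lia.
congr (_ * (nth _ _ _)^*); lia.
Qed.

Lemma rho_neg (g h : seq algC) n : size g = size h ->
  rho g h (Negz n) = (rho h g (Posz n.+1))^*.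
Proof.
move=> sgh; rewrite /rho /= rmorph_sum sgh; apply: eq_bigr => j _.
by rewrite rmorphM mulrC; congr (_ * _); symmetry; exact: conjCK.
Qed.

Lemma Poly_rcons (s : seq algC) y : Poly (rcons s y) = Poly s + 'X^(size s) * y%:P.
Proof. by rewrite -cats1 Poly_cat Poly_cons /= mulr0 addr0. Qed.

Lemma auto_id (A B Ar Br x x' XN : {poly algC}) :
  let G := x + 'X * (A + XN * Br + XN * XN * (- x')) in
  let Gc := - x + 'X * (B + XN * Ar + XN * XN * x') in
  let H := x + 'X * (B + XN * (- Ar) + XN * XN * x') in
  let Hc := x + 'X * (- A + XN * Br + XN * XN * x') in
  G * Gc + H * Hc = 2 * 'X * XN * ('X * (A * Ar + B * Br)) + 'X * XN * XN * (4 * x * x')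
     + 'X * (2 * x * (B - A)) + 'X * 'X * XN * XN * XN * (2 * x' * (Br - Ar)).
Proof. rewrite /=. ring. Qed.

Lemma cross_id (A B Ar Br x x' XN : {poly algC}) :
  let G := x + 'X * (A + XN * Br + XN * XN * (- x')) in
  let Gc := - x + 'X * (B + XN * Ar + XN * XN * x') in
  let H := x + 'X * (B + XN * (- Ar) + XN * XN * x') in
  let Hc := x + 'X * (- A + XN * Br + XN * XN * x') in
  G * Hc + H * Gc = 'X * 'X * ((B - A) * (B + A)) + 'X * 'X * XN * XN * (Br * Br - Ar * Ar)
     + 'X * XN * (2 * x * (Ar + Br)) + 'X * 'X * XN * XN * (2 * x' * (A + B)).
Proof. rewrite /=. ring. Qed.

Lemma coef_low m (P : {poly algC}) k : (k < m)%N -> ('X^m * P)`_k = 0.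
Proof. by move=> h; rewrite coefXnM h. Qed.

Lemma coef2C (c : algC) (P : {poly algC}) i : (2 * c%:P * P)`_i = 2 * c * P`_i.
Proof.
have -> : (2 * c%:P : {poly algC}) = (2 * c)%:P by rewrite polyCM polyC_natr.
by rewrite coefCM.
Qed.

Lemma final_czcp (a b : seq algC) N p (x0 y0 x1 y1 : algC) :
  Inv (a, b) N p ->
  x0 - y1^* = 0 -> x1 + y0^* = 0 -> x0 = x1 -> y0^* = - y1^* ->
  let c := rev b in
  let d := [seq - x | x <- rev a] in
  let e := a ++ c in
  let f := b ++ d in
  let g := x0 :: rcons e y0 in
  let h := x1 :: rcons f y1 in
  CZCP (2 * N + 2) (p + 1) g h.
Proof.
case=> /= [[sa sb N0] [ra rb] HA [pre _] pN] e1 e2 e3 e4.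
set g := x0 :: rcons (a ++ rev b) y0; set h := x1 :: rcons (b ++ [seq - x | x <- rev a]) y1.
have ey1 : y1^* = x0 by apply/eqP; rewrite eq_sym -subr_eq0 e1.
have ey0 : y0^* = - x0 by rewrite e4 ey1.
have ey0' : y0 = - x0^*.
  by have := conjCK y0; rewrite ey0 rmorphN => <-.
have ey1' : y1 = x0^*.
  by have := conjCK y1; rewrite ey1 => <-.
set A := Poly a; set B := Poly b; set Ar := Poly (rev a); set Br := Poly (rev b).
set XN := ('X^N : {poly algC}).
have sg : size g = (2 * N + 2)%N by rewrite /g /= size_rcons size_cat size_rev sa sb; lia.
have sh : size h = (2 * N + 2)%N by rewrite /h /= size_rcons size_cat size_map size_rev sa sb; lia.
have Rna : all Rl [seq - x | x <- a] by rewrite all_map; apply/allP => z hz; apply: RlN; exact: (allP ra).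
have PG : Poly g = x0%:P + 'X * (A + XN * Br + XN * XN * (- (x0^*)%:P)).
  rewrite /g Poly_cons Poly_rcons Poly_cat size_cat size_rev sa sb exprD ey0' polyCN.
  by rewrite /A /Br /XN; ring.
have PGc : Poly (map Num.conj (rev g)) = - x0%:P + 'X * (B + XN * Ar + XN * XN * (x0^*)%:P).
  rewrite /g rev_cons rev_rcons map_rcons map_cons rev_cat revK map_conj_id; last first.
    by rewrite all_cat rb all_rev ra.
  rewrite Poly_cons Poly_rcons Poly_cat size_cat size_rev sa sb exprD ey0 polyCN.
  by rewrite /B /Ar /XN; ring.
have PH : Poly h = x0%:P + 'X * (B + XN * (- Ar) + XN * XN * (x0^*)%:P).
  rewrite /h Poly_cons Poly_rcons Poly_cat size_cat size_map size_rev sa sb exprD ey1' -e3 Poly_opp.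
  by rewrite /B /Ar /XN; ring.
have PHc : Poly (map Num.conj (rev h)) = x0%:P + 'X * (- A + XN * Br + XN * XN * (x0^*)%:P).
  rewrite /h rev_cons rev_rcons map_rcons map_cons rev_cat -map_rev revK map_conj_id; last first.
    by rewrite all_cat Rna all_rev rb.
  rewrite Poly_cons Poly_rcons Poly_cat !size_cat size_map size_rev sa sb exprD ey1 -e3 Poly_opp.
  by rewrite /A /Br /XN; ring.
have nBA : forall i, (i < p)%N || (N <= i)%N -> (B - A)`_i = 0.
  move=> i /orP [hi|hi]; rewrite coefB !coef_Poly.
    by rewrite pre // subrr.
  by rewrite !nth_default ?subrr ?sa ?sb.
have AUTO : forall k, ((k <= p) || (2 * N - p <= k <= 2 * N))%N ->
    (Poly g * Poly (map Num.conj (rev g)) + Poly h * Poly (map Num.conj (rev h)))`_k = 0.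
  move=> k hk.
  rewrite PG PGc PH PHc auto_id HA.
  have -> : 2 * 'X * XN * (((2 * N)%:R)%:P * 'X^N) = 'X^((N + N).+1) * (2 * ((2 * N)%:R)%:P).
    by rewrite /XN exprS exprD; ring.
  have -> : 'X * XN * XN * (4 * x0%:P * (x0^*)%:P) = 'X^((N + N).+1) * (4 * x0%:P * (x0^*)%:P).
    by rewrite /XN exprS exprD; ring.
  have -> : forall Q, 'X * 'X * XN * XN * XN * Q = 'X^((N + N + N).+2) * Q.
    by move=> Q; rewrite /XN !exprS !exprD; ring.
  rewrite !coefD !(coef_low ((N + N).+1)); try lia.
  rewrite (coef_low ((N + N + N).+2)); last by lia.
  rewrite coefXM; case: eqP => [|k0]; first by rewrite !add0r.
  rewrite coef2C nBA ?mulr0 ?add0r ?addr0 //.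
  apply/orP; lia.
have CROSS : forall k, (k <= p)%N ->
    (Poly g * Poly (map Num.conj (rev h)) + Poly h * Poly (map Num.conj (rev g)))`_k = 0.
  move=> k hk.
  rewrite PG PGc PH PHc cross_id.
  have E1 : forall Q, 'X * 'X * XN * XN * Q = 'X^((N + N).+2) * Q.
    by move=> Q; rewrite /XN !exprS !exprD; ring.
  have E2 : forall Q, 'X * XN * Q = 'X^(N.+1) * Q.
    by move=> Q; rewrite /XN !exprS; ring.
  have E3 : forall Q, 'X * 'X * Q = 'X^2 * Q.
    by move=> Q; rewrite expr2.
  rewrite !E1 E2 E3.
  rewrite !coefD !(coef_low ((N + N).+2)); try lia.
  rewrite (coef_low (N.+1)); last by lia.
  rewrite coefXnM; case: ltnP => [_|k2]; first by rewrite !addr0.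
  rewrite coefM big1 ?add0r ?addr0 // => j _.
  rewrite nBA ?mul0r //; apply/orP; left.
  have := ltn_ord j; lia.
have Gpos : forall t, (t < 2 * N + 2)%N -> rho g g (Posz t) + rho h h (Posz t)
     = (Poly g * Poly (map Num.conj (rev g)) + Poly h * Poly (map Num.conj (rev h)))`_(2 * N + 2 - t.+1).
  by move=> t ht; rewrite !rho_pos ?sg ?sh // coefD.
have Cpos : forall t, (t < 2 * N + 2)%N -> rho g h (Posz t) + rho h g (Posz t)
     = (Poly g * Poly (map Num.conj (rev h)) + Poly h * Poly (map Num.conj (rev g)))`_(2 * N + 2 - t.+1).
  by move=> t ht; rewrite !rho_pos ?sg ?sh // coefD.
have AP : forall t, ((1 <= t <= p + 1) || (2 * N + 2 - (p + 1) <= t <= 2 * N + 2 - 1))%N ->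
    rho g g (Posz t) + rho h h (Posz t) = 0.
  move=> t ht; rewrite Gpos; last by lia.
  apply: AUTO; apply/orP; lia.
have CP : forall t, (2 * N + 2 - (p + 1) <= t <= 2 * N + 2 - 1)%N ->
    rho g h (Posz t) + rho h g (Posz t) = 0.
  move=> t ht; rewrite Cpos; last by lia.
  apply: CROSS; lia.
split; [exact: sg | exact: sh | |].
- case=> [t|n] ht; first exact: AP.
  rewrite !rho_neg ?sg ?sh // -rmorphD AP ?rmorph0 //.
- case=> [t|n] ht; first exact: CP.
  rewrite !rho_neg ?sg ?sh // -rmorphD addrC CP ?rmorph0 //.
Qed.

Theorem theorem3 (q : nat) (a b : seq algC) (N Z : nat) (x0 y0 x1 y1 : algC) :
  (2 <= q)%N ->
  [\/ (exists beta : nat, [/\ (1 <= beta)%N, N = (10 ^ beta)%N,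
          (a, b) = iter beta.-1 (turyn K10) K10 & Z = (4 * N %/ 10 + 1)%N]),
      (exists gamma : nat, [/\ (1 <= gamma)%N, N = (26 ^ gamma)%N,
          (a, b) = iter gamma.-1 (turyn K26) K26 & Z = (12 * N %/ 26 + 1)%N]) |
      (exists (beta gamma : nat) (s : seq bool),
          [/\ (1 <= gamma)%N, N = (10 ^ beta * 26 ^ gamma)%N,
              size s = (beta + gamma).-1 /\ count id s = beta,
              (a, b) = turyn_chain K26 s & Z = (12 * N %/ 26 + 1)%N])] ->
  x0 \in Uq q -> y0 \in Uq q -> x1 \in Uq q -> y1 \in Uq q ->
  x0 - y1^* = 0 -> x1 + y0^* = 0 -> x0 = x1 -> y0^* = - y1^* ->
  let c := rev b in
  let d := [seq - x | x <- rev a] in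
  let e := a ++ c in
  let f := b ++ d in
  let g := x0 :: rcons e y0 in
  let h := x1 :: rcons f y1 in
  CZCP (2 * N + 2) Z g h.
Proof.
move=> hq H hx0 hy0 hx1 hy1 e1 e2 e3 e4.
have [p [I Zp]] : exists p, Inv (a, b) N p /\ Z = (p + 1)%N.
  case: H.
  - case=> beta [b1 hN hab hZ]; exists (10 ^ beta.-1 * 4)%N; split.
      by rewrite hab hN; have := @iter_inv _ _ _ beta.-1 inv10; rewrite prednK.
    rewrite hZ hN; case: beta b1 {hN hab hZ} => // b' _.
    by rewrite expnSr mulnA mulnK // mulnC.
  - case=> gamma [g1 hN hab hZ]; exists (26 ^ gamma.-1 * 12)%N; split.
      by rewrite hab hN; have := @iter_inv _ _ _ gamma.-1 inv26; rewrite prednK.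
    rewrite hZ hN; case: gamma g1 {hN hab hZ} => // g' _.
    by rewrite expnSr mulnA mulnK // mulnC.
  - case=> beta [gamma [s [g1 hN [hs hc] hab hZ]]].
    have E : (size s - count id s = gamma.-1)%N by rewrite hs hc; lia.
    exists (10 ^ beta * 26 ^ gamma.-1 * 12)%N; split.
      rewrite hab hN; have := @chain_inv s _ _ _ inv26; rewrite E hc.
      by rewrite -mulnA -expnSr prednK.
    rewrite hZ hN; case: gamma g1 {hN hab hZ hs E} => // g' _.
    rewrite expnSr !mulnA mulnK // /=; nia.
rewrite Zp; exact: final_czcp I e1 e2 e3 e4.
Qed.
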